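(* Let $n,d\in\mathbb{N}$, let $\mathcal{A}_n=\{0,2,4,\dots,2n-2\}$ and $\mathcal{B}_n=\{1,3,5,\dots,2n-1\}$. Let $X,Y,A,B,\Lambda$ be random variables with joint distribution $P_{XYAB\Lambda}$, where $X$ and $Y$ take values in $\{0,1,\dots,d\}$, such that $P_{X\Lambda|AB}=P_{X\Lambda|A}$, $P_{Y\Lambda|AB}=P_{Y\Lambda|B}$, and $P_{AB\Lambda}=P_A\times P_B\times P_\Lambda$, with $\mathrm{supp}(P_A)\supseteq\mathcal{A}_n$ and $\mathrm{supp}(P_B)\supseteq\mathcal{B}_n$. Then $$\int \mathrm{d}P_\Lambda(\lambda)\sum_{x=0}^{d-1}\Big|P_{X|A\Lambda}(x|0,\lambda)-\frac1d\Big|\le\frac d2\, I_{n,d}(P_{XY|AB}).$$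
   Context: For a conditional distribution $P_{XY|AB}$, define $$I_{n,d}(P_{XY|AB})=2n-\sum_{x=0}^{d-1}P_{XY|AB}(x,x\oplus1|0,2n-1)-\sum_{\substack{a\in\mathcal{A}_n,\,b\in\mathcal{B}_n\\|a-b|=1}}\sum_{x=0}^{d-1}P_{XY|AB}(x,x|a,b),$$ where $\oplus$ denotes addition modulo $d$ on $\{0,\dots,d-1\}$. *)

(* Defs.v *)
From HB Require Import structures.
From mathcomp Require Import all_boot all_order all_algebra.
From mathcomp Require Import all_classical all_reals all_analysis.
Set Implicit Arguments. Unset Strict Implicit. Unset Printing Implicit Defensive.
Import Order.TTheory GRing.Theory Num.Theory.
Local Open Scope ring_scope.

Definition inA (n a : nat) : bool := ~~ odd a && (a < 2 * n)%N.
Definition inB (n b : nat) : bool := odd b && (b < 2 * n)%N.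

(* The hidden variable Lambda lives in a measurable space L with law P.
   p a b l x y = P_{XY|AB Lambda}(x,y | a,b,l), outputs X,Y in {0,...,d}. *)
Definition PXY {R : realType} {dL : measure_display} {L : measurableType dL}
  (P : probability L R) (d : nat)
  (p : nat -> nat -> L -> 'I_d.+1 -> 'I_d.+1 -> R) (a b x y : nat) : R :=
  fine (\int[P]_l (p a b l (inord x) (inord y))%:E)%E.

(* P_{X|A Lambda}(x|a,l) computed as the X-marginal of p at input b
   (independent of b by no-signalling). *)
Definition PXgivenAL {R : realType} {L : Type} (d : nat)
  (p : nat -> nat -> L -> 'I_d.+1 -> 'I_d.+1 -> R) (a b : nat) (l : L)
  (x : nat) : R :=
  \sum_(y < d.+1) p a b l (inord x) y.

Definition Ind {R : realType} {dL : measure_display} {L : measurableType dL}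
  (P : probability L R) (n d : nat)
  (p : nat -> nat -> L -> 'I_d.+1 -> 'I_d.+1 -> R) : R :=
  (2 * n)%:R
  - \sum_(x < d) PXY P p 0 (2 * n - 1) x ((x + 1) %% d)
  - \sum_(a < 2 * n | inA n a) \sum_(b < 2 * n | inB n b && ((a.+1 == b) || (b.+1 == a)))
       \sum_(x < d) PXY P p a b x x.

(* Main.v *)
Require Import Defs.
From HB Require Import structures.
From mathcomp Require Import all_boot all_order all_algebra.
From mathcomp Require Import all_classical all_reals all_analysis.
From mathcomp Require Import measurable_realfun.
From mathcomp Require Import ring lra zify.
Import Order.TTheory GRing.Theory Num.Theory.
Local Open Scope ring_scope.

Section Alg.
Variable R : realFieldType.
Implicit Types (p : nat -> R).

Definition pos (t : R) := (t + `|t|) / 2.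
Lemma pos_ge0 t : 0 <= pos t.
Proof. have h1 := ler_norm t; have h2 := ler_norm (- t); rewrite normrN in h2; rewrite /pos; lra. Qed.
Lemma pos_ge t : t <= pos t.
Proof. have h1 := ler_norm t; have h2 := ler_norm (- t); rewrite normrN in h2; rewrite /pos; lra. Qed.
Lemma pos_norm t : `|t| = pos t + pos (- t).
Proof. rewrite /pos normrN; lra. Qed.

Lemma ex_max p d : (0 < d)%N -> exists2 i, (i < d)%N & forall x, (x < d)%N -> p x <= p i.
Proof.
elim: d => [//|d IH _].
case: d IH => [|d] IH.
  by exists 0%N => // x; rewrite ltnS leqn0 => /eqP->.
have [i Hi Hmax] := IH isT.
case: (lerP (p d.+1) (p i)) => h.
  exists i; first by apply: ltn_trans Hi _.
  by move=> x; rewrite ltnS leq_eqVlt => /orP[/eqP->|/Hmax].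
exists d.+1 => // x; rewrite ltnS leq_eqVlt => /orP[/eqP->//|/Hmax/le_trans]; apply; exact: ltW.
Qed.

Lemma periodic_shift (h : nat -> R) d j : (forall k, h (k + d)%N = h k) ->
  \sum_(j <= k < j + d) h k = \sum_(0 <= k < d) h k.
Proof.
move=> hp; elim: j => [|j IH]; first by rewrite add0n.
have e1 : \sum_(j <= k < (j + d).+1) h k = h j + \sum_(j.+1 <= k < (j+d).+1) h k.
  by rewrite big_ltn // ltnS leq_addr.
have e2 : \sum_(j <= k < (j + d).+1) h k = \sum_(j <= k < j + d) h k + h (j + d)%N.
  by rewrite big_nat_recr //= leq_addr.
rewrite addSn -IH; have := hp j; lra.
Qed.

Lemma sum_mono_range (h : nat -> R) a b c : (forall k, 0 <= h k) -> (a <= b)%N -> (b <= c)%N ->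
  \sum_(a <= k < b) h k <= \sum_(a <= k < c) h k.
Proof.
move=> h0 ab bc; rewrite (big_cat_nat ab bc) /= lerDl; exact: sumr_ge0.
Qed.

Lemma arc_step (g : nat -> R) j t : g (j + t)%N - g j <= \sum_(j <= k < j + t) pos (g k.+1 - g k).
Proof.
elim: t => [|t IH]; first by rewrite addn0 big_geq // subrr.
rewrite addnS big_nat_recr /= ?leq_addr //; have := pos_ge (g (j+t).+1 - g (j+t)%N); lra.
Qed.

Lemma arc p d i j : (i < d)%N -> (j < d)%N ->
  p i - p j <= \sum_(k < d) pos (p (k.+1 %% d)%N - p k).
Proof.
move=> id jd; set g := fun k => p (k %% d)%N.
have E : \sum_(k < d) pos (p (k.+1 %% d)%N - p k) = \sum_(j <= k < j + d) pos (g k.+1 - g k).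
  rewrite periodic_shift; last by move=> k; rewrite /g -addSn !modnDr.
  rewrite big_mkord; apply: eq_bigr => k _; by rewrite /g (modn_small (ltn_ord k)).
rewrite E; have [ji|ij] := leqP j i.
  have := arc_step g j (i - j); rewrite subnKC // /g !modn_small // => h.
  apply: le_trans h _; apply: sum_mono_range; [move=> k; exact: pos_ge0|exact: ji|lia].
have := arc_step g j (i + d - j).
have -> : (j + (i + d - j) = i + d)%N by lia.
rewrite /g modnDr !modn_small // => h.
apply: le_trans h _; apply: sum_mono_range; [move=> k; exact: pos_ge0|lia|lia].
Qed.

Lemma cyc p d i j : (i < d)%N -> (j < d)%N ->
  2 * (p i - p j) <= \sum_(k < d) `|p (k.+1 %% d)%N - p k|.
Proof.
move=> id jd; have h1 := arc p d i j id jd; have h2 := arc (fun k => - p k) d j i jd id.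
have -> : \sum_(k < d) `|p (k.+1 %% d)%N - p k| = \sum_(k < d) pos (p (k.+1 %% d)%N - p k)
   + \sum_(k < d) pos (- p (k.+1 %% d)%N - - p k).
  rewrite -big_split; apply: eq_bigr => k _; rewrite pos_norm; congr (_ + pos _); lra.
lra.
Qed.

Lemma rot (f : nat -> R) d : \sum_(x < d) f (x.+1 %% d)%N = \sum_(x < d) f x.
Proof.
set h := fun k => f (k %% d)%N.
have e1 : \sum_(0 <= k < d.+1) h k = h 0%N + \sum_(0 <= k < d) h k.+1 by rewrite big_nat_recl.
have e2 : \sum_(0 <= k < d.+1) h k = \sum_(0 <= k < d) h k + h d by rewrite big_nat_recr.
have e3 : h d = h 0%N by rewrite /h modnn mod0n.
have e4 : \sum_(0 <= k < d) h k.+1 = \sum_(x < d) f (x.+1 %% d)%N by rewrite big_mkord.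
have e5 : \sum_(0 <= k < d) h k = \sum_(x < d) f x.
  rewrite big_mkord; apply: eq_bigr => x _; by rewrite /h modn_small.
rewrite -e4 -e5; lra.
Qed.

Lemma sum_cst_ord d (c : R) : \sum_(x < d) c = d%:R * c.
Proof. by rewrite sumr_const card_ord mulr_natl. Qed.

Lemma spread p d : (0 < d)%N ->
  \sum_(x < d) `|p x - (\sum_(y < d) p y) / d%:R| <= d%:R / 4 * \sum_(k < d) `|p (k.+1 %% d)%N - p k|.
Proof.
move=> d0.
have [i id imax] := ex_max p d d0.
have [j jd jmin'] := ex_max (fun k => - p k) d d0.
have jmin : forall x, (x < d)%N -> p j <= p x by move=> x /jmin'; rewrite lerN2.
have hc := cyc p d i j id jd.
set M := p i in imax hc *; set m := p j in jmin hc *.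
set S := \sum_(y < d) p y; set mu := S / d%:R.
have dpos : 0 < d%:R :> R by rewrite ltr0n.
have Sd : S = mu * d%:R by rewrite /mu divfK // pnatr_eq0 -lt0n.
have lo : d%:R * m <= S by rewrite -sum_cst_ord; apply: ler_sum => x _; exact: jmin.
have hi : S <= d%:R * M by rewrite -sum_cst_ord; apply: ler_sum => x _; exact: imax.
have mM : m <= M by exact: jmin.
have mmu : m <= mu by rewrite Sd in lo; nra.
have muM : mu <= M by rewrite Sd in hi; nra.
have key : forall x : 'I_d, (M - m) * `|p x - mu| <= (p x - m) * (M - mu) + (mu - m) * (M - p x).
  move=> x; have h1 := jmin x (ltn_ord x); have h2 := imax x (ltn_ord x).
  case: (lerP mu (p x)) => h.
    idtac.
    have : 0 <= (mu - m) * (M - p x) by apply: mulr_ge0; lra.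
    nra.
  idtac.
  have : 0 <= (p x - m) * (M - mu) by apply: mulr_ge0; lra.
  nra.
have E : \sum_(x < d) ((p x - m) * (M - mu) + (mu - m) * (M - p x))
   = S * (M - mu - (mu - m)) + d%:R * ((mu - m) * M - m * (M - mu)).
  rewrite (eq_bigr (fun x : 'I_d => p x * (M - mu - (mu - m)) + ((mu - m) * M - m * (M - mu)))); last first.
    by move=> x _; ring.
  by rewrite big_split /= -mulr_suml sum_cst_ord.
have T1 : (M - m) * \sum_(x < d) `|p x - mu| <= (M - m) * (d%:R * (M - m) / 2).
  rewrite mulr_sumr; apply: le_trans (ler_sum _ (fun x _ => key x)) _.
  rewrite E Sd.
  have : 0 <= d%:R * (M + m - 2 * mu) ^+ 2 by apply: mulr_ge0; [lra|exact: sqr_ge0].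
  nra.
have T2 : \sum_(x < d) `|p x - mu| <= d%:R * (M - m).
  rewrite -sum_cst_ord; apply: ler_sum => x _; rewrite ler_norml.
  have h1 := jmin x (ltn_ord x); have h2 := imax x (ltn_ord x); apply/andP; split; lra.
have T3 : \sum_(x < d) `|p x - mu| <= d%:R * (M - m) / 2.
  have [mM0|mMlt] := eqVneq M m.
    by rewrite mM0 subrr mulr0 mul0r in T2 *.
  have hp : 0 < M - m by rewrite subr_gt0 lt_neqAle eq_sym mMlt mM.
  rewrite -(ler_pM2l hp); rewrite -mulrA in T1; lra.
apply: le_trans T3 _; nra.
Qed.

End Alg.
Definition bA (k : nat) : nat := if odd k then k.+1 else k.
Definition bB (k : nat) : nat := if odd k then k else k.+1.

Section Pair.
Variable R : realFieldType.

Lemma evens (H : nat -> R) m :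
  \sum_(a < 2 * m | ~~ odd a) H a = \sum_(0 <= i < m) H (2 * i)%N.
Proof.
rewrite -(big_mkord (fun a => ~~ odd a) H); elim: m => [|m IH]; first by rewrite !big_geq.
have -> : (2 * m.+1 = (2 * m).+2)%N by lia.
rewrite big_mkcond big_nat_recr // big_nat_recr //= -big_mkcond IH.
rewrite big_nat_recr //= mul2n odd_double /= addr0; congr (_ + _); by rewrite mul2n.
Qed.

Lemma inner_sum (F : nat -> nat -> R) n (a : 'I_(2 * n)) : inA n a ->
  \sum_(b < 2 * n | inB n b && ((a.+1 == b) || (b.+1 == a))) F a b
  = F a a.+1 + (if (0 < a)%N then F a a.-1 else 0).
Proof.
case/andP => ev alt.
rewrite (eq_bigl (fun b : 'I_(2 * n) => (b == a.+1 :> nat) || ((0 < a)%N && (b == a.-1 :> nat)))); last first.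
  move=> b; rewrite /inB (ltn_ord b) andbT; apply/idP/idP.
    case/andP => ob /orP[/eqP e|/eqP e]; first by rewrite -e eqxx.
    by apply/orP; right; rewrite -e /= eqxx.
  case/orP => [/eqP e|/andP[a0 /eqP e]].
    by rewrite e /= ev eqxx.
  have ab : (nat_of_ord a = b.+1)%N by lia.
  by move: ev; rewrite (congr1 odd ab) /= negbK => ->; apply/orP; right; apply/eqP; lia.
rewrite big_mkcond /=.
rewrite (eq_bigr (fun b : 'I_(2 * n) => (if (b == a.+1 :> nat) then F a b else 0)
     + (if (0 < a)%N && (b == a.-1 :> nat) then F a b else 0))); last first.
  move=> b _; case: eqP => [e|_] /=; last by rewrite add0r.
  rewrite e; have -> : (a.+1 == a.-1) = false by lia.
  by rewrite andbF addr0.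
rewrite big_split /= -!big_mkcond /= big_ord1_eq.
have -> : (a.+1 < 2 * n)%N.
  apply/negPn/negP => h; have e : (nat_of_ord a = 2 * n - 1)%N by lia.
  move: ev; rewrite e; have -> : (2 * n - 1 = (2 * n.-1).+1)%N by lia.
  by rewrite /= oddM.
congr (_ + _); case: (0 < a)%N => /=; last by rewrite big_pred0.
by rewrite big_ord1_eq (leq_ltn_trans (leq_pred a) alt).
Qed.

Lemma chain_sum (F : nat -> nat -> R) m :
  \sum_(0 <= i < m.+1) (F (2 * i)%N (2 * i).+1 + (if (0 < 2 * i)%N then F (2 * i)%N (2 * i).-1 else 0))
  = \sum_(0 <= k < (2 * m).+1) F (bA k) (bB k).
Proof.
elim: m => [|m IH]; first by rewrite !big_nat1 /bA /bB /= addr0.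
rewrite big_nat_recr // IH.
have e : ((2 * m.+1).+1 = ((2 * m).+1).+2)%N by lia.
rewrite e (big_nat_recr (2 * m).+2) // (big_nat_recr (2 * m).+1) //.
have o1 : odd (2 * m).+1 = true by rewrite /= mul2n odd_double.
have o2 : odd (2 * m).+2 = false by rewrite /= mul2n odd_double.
have e2 : (2 * m.+1 = (2 * m).+2)%N by lia.
have g1 : bA (2 * m).+1 = (2 * m).+2 by rewrite /bA o1.
have g2 : bB (2 * m).+1 = (2 * m).+1 by rewrite /bB o1.
have g3 : bA (2 * m).+2 = (2 * m).+2 by rewrite /bA o2.
have g4 : bB (2 * m).+2 = (2 * m).+3 by rewrite /bB o2.
rewrite e2 g1 g2 g3 g4 /=; lra.
Qed.

Lemma pair_sum (F : nat -> nat -> R) n : (0 < n)%N ->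
  \sum_(a < 2 * n | inA n a) \sum_(b < 2 * n | inB n b && ((a.+1 == b) || (b.+1 == a))) F a b
  = \sum_(0 <= k < 2 * n - 1) F (bA k) (bB k).
Proof.
case: n => [//|m] _.
rewrite (eq_bigr (fun a : 'I_(2 * m.+1) => F a a.+1 + (if (0 < a)%N then F a a.-1 else 0))); last first.
  by move=> a; exact: inner_sum.
rewrite (eq_bigl (fun a : 'I_(2 * m.+1) => ~~ odd a)); last by move=> a; rewrite /inA (ltn_ord a) andbT.
rewrite (evens (fun a => F a a.+1 + (if (0 < a)%N then F a a.-1 else 0))).
have -> : (2 * m.+1 - 1 = (2 * m).+1)%N by lia.
exact: chain_sum.
Qed.

End Pair.
Set Implicit Arguments. Unset Strict Implicit.

Lemma sum_d0 (R : realFieldType) d (f : nat -> R) : d = 0%N -> \sum_(x < d) f x = 0.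
Proof. by move=> ->; rewrite big_ord0. Qed.

Lemma sum_d1 (R : realFieldType) d (f : nat -> R) : d = 1%N ->
  \sum_(x < d) `|f x - (\sum_(y < d) f y) / d%:R| = 0.
Proof. by move=> ->; rewrite !big_ord1 divr1 subrr normr0. Qed.

Lemma rot' (R : realFieldType) (f : nat -> R) d : \sum_(x < d) f ((x + 1) %% d)%N = \sum_(x < d) f x.
Proof. rewrite -(rot R f d); apply: eq_bigr => x _; by rewrite addn1. Qed.

Lemma single_le (R : realFieldType) (k : nat) (F : 'I_k -> R) i : (forall j, 0 <= F j) -> F i <= \sum_j F j.
Proof. by move=> h; rewrite (bigD1 i) //= lerDl sumr_ge0. Qed.

Lemma chain_tri (R : realFieldType) (f : nat -> R) N : `|f 0%N - f N| <= \sum_(0 <= k < N) `|f k - f k.+1|.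
Proof.
elim: N => [|N IH]; first by rewrite subrr normr0 big_geq.
rewrite big_nat_recr //=; apply: le_trans (ler_distD (f N) _ _) _; lra.
Qed.

Section Point.
Variable R : realFieldType.
Variables (n d : nat) (suppA suppB : pred nat) (q : nat -> nat -> 'I_d.+1 -> 'I_d.+1 -> R).
Hypothesis n0 : (0 < n)%N.
Hypothesis hA : forall a, inA n a -> suppA a.
Hypothesis hB : forall b, inB n b -> suppB b.
Hypothesis q0 : forall a b x y, suppA a -> suppB b -> 0 <= q a b x y.
Hypothesis q1 : forall a b, suppA a -> suppB b -> \sum_(x < d.+1) \sum_(y < d.+1) q a b x y = 1.
Hypothesis nsB : forall a b b' x, suppA a -> suppB b -> suppB b' ->
  \sum_(y < d.+1) q a b x y = \sum_(y < d.+1) q a b' x y.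
Hypothesis nsA : forall a a' b y, suppA a -> suppA a' -> suppB b ->
  \sum_(x < d.+1) q a b x y = \sum_(x < d.+1) q a' b x y.

Lemma sA0 : suppA 0.
Proof. apply: hA; rewrite /inA /=; lia. Qed.
Lemma sB1 : suppB 1.
Proof. apply: hB; rewrite /inB /=; lia. Qed.

Definition al a (x : nat) := \sum_(y < d.+1) q a 1 (inord x) y.
Definition be b (y : nat) := \sum_(x < d.+1) q 0 b x (inord y).

Lemma row a b x : suppA a -> suppB b -> \sum_(y < d.+1) q a b (inord x) y = al a x.
Proof. move=> ha hb; exact: (@nsB a b 1 _ ha hb sB1). Qed.
Lemma col a b y : suppA a -> suppB b -> \sum_(x < d.+1) q a b x (inord y) = be b y.
Proof. move=> ha hb; exact: (@nsA a 0 b _ ha sA0 hb). Qed.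

Lemma qle_row a b x y : suppA a -> suppB b -> q a b (inord x) (inord y) <= al a x.
Proof. move=> ha hb; rewrite -(row x ha hb); apply: single_le => j; exact: (q0 _ _ ha hb). Qed.
Lemma qle_col a b x y : suppA a -> suppB b -> q a b (inord x) (inord y) <= be b y.
Proof. move=> ha hb; rewrite -(col y ha hb); apply: (@single_le _ _ (fun j => q a b j (inord y))) => j; exact: (q0 _ _ ha hb). Qed.

Lemma sub_le (G : 'I_d.+1 -> R) : (forall j, 0 <= G j) -> \sum_(x < d) G (inord x) <= \sum_x G x.
Proof.
move=> h; rewrite big_ord_recr /=.
rewrite (eq_bigr (fun x : 'I_d => G (widen_ord (leqnSn d) x))); first by have := h ord_max; lra.
move=> x _; congr G; apply: val_inj; by rewrite /= inordK // ltnS ltnW.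
Qed.

Lemma massA a : suppA a -> \sum_(x < d) al a x <= 1.
Proof.
move=> ha; rewrite -(@q1 a 1 ha sB1) /al.
apply: (@sub_le (fun x => \sum_(y < d.+1) q a 1 x y)) => j; apply: sumr_ge0 => y _; exact: (q0 _ _ ha sB1).
Qed.
Lemma massB b : suppB b -> \sum_(y < d) be b y <= 1.
Proof.
move=> hb; rewrite -(@q1 0 b sA0 hb) /be exchange_big /=; apply: ler_sum => x _.
apply: (@sub_le (fun y => q 0 b x y)) => j; exact: (q0 _ _ sA0 hb).
Qed.

Lemma LL a b (s : nat -> nat) : suppA a -> suppB b ->
  \sum_(x < d) `|al a x - be b (s x)| <=
  \sum_(x < d) al a x + \sum_(x < d) be b (s x) - 2 * \sum_(x < d) q a b (inord x) (inord (s x)).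
Proof.
move=> ha hb; rewrite mulr_sumr -big_split -sumrB /=.
apply: ler_sum => x _; have h1 := qle_row x (s x) ha hb; have h2 := qle_col x (s x) ha hb.
rewrite ler_norml; apply/andP; split; lra.
Qed.

Lemma LLid a b : suppA a -> suppB b ->
  \sum_(x < d) `|al a x - be b x| <=
  \sum_(x < d) al a x + \sum_(x < d) be b x - 2 * \sum_(x < d) q a b (inord x) (inord x).
Proof. exact: (LL (fun x => x)). Qed.

Definition r k (y : nat) := if odd k then be k y else al k y.
Definition mr k := \sum_(y < d) r k y.
Definition T k := \sum_(y < d) q (bA k) (bB k) (inord y) (inord y).

Lemma mr_le1 k : (k < 2 * n)%N -> mr k <= 1.
Proof.
move=> kl; rewrite /mr /r; case ok: (odd k).
  by apply: massB; apply: hB; rewrite /inB ok kl.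
by apply: massA; apply: hA; rewrite /inA ok kl.
Qed.

Lemma supp_box k : (k.+1 < 2 * n)%N -> suppA (bA k) /\ suppB (bB k).
Proof.
move=> kl; rewrite /bA /bB; case ok: (odd k); split.
- by apply: hA; rewrite /inA /= ok kl.
- by apply: hB; rewrite /inB ok; apply: ltn_trans kl.
- by apply: hA; rewrite /inA ok; apply: ltn_trans kl.
- by apply: hB; rewrite /inB /= ok kl.
Qed.

Lemma T_le k : (k.+1 < 2 * n)%N -> T k <= \sum_(y < d) al (bA k) y.
Proof.
move=> kl; have [ha hb] := supp_box kl; apply: ler_sum => y _; exact: qle_row.
Qed.

Lemma link k : (k.+1 < 2 * n)%N ->
  \sum_(y < d) `|r k y - r k.+1 y| <= mr k + mr k.+1 - 2 * T k.
Proof.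
move=> kl; have [ha hb] := supp_box kl; move: ha hb.
rewrite /mr /r /T /bA /bB /=; case ok: (odd k) => /= ha hb.
  under eq_bigr do rewrite distrC.
  have := LLid ha hb; lra.
exact: LLid.
Qed.

Lemma T_le1 k : (k.+1 < 2 * n)%N -> T k <= 1.
Proof.
move=> kl; apply: le_trans (T_le kl) _; apply: massA; exact: (supp_box kl).1.
Qed.

Definition Tl := \sum_(x < d) q 0 (2 * n - 1) (inord x) (inord ((x + 1) %% d)%N).

Lemma pointwise :
  \sum_(x < d) `|al 0 x - d%:R^-1| <=
  d%:R / 2 * ((2 * n)%:R - Tl - \sum_(0 <= k < 2 * n - 1) T k).
Proof.
set N := (2 * n - 1)%N.
have oN : odd N.
  have -> : N = (2 * n.-1).+1 by rewrite /N; lia.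
  by rewrite /= mul2n odd_double.
have hBN : suppB N by apply: hB; rewrite /inB oN /N; lia.
have eN : (2 * n = N.+1)%N by rewrite /N; lia.
have N0 : (0 < N)%N by rewrite /N; lia.
set m := \sum_(x < d) al 0 x.
have m1 : m <= 1 := massA sA0.
have mr0 : mr 0 = m by [].
have rN : forall y, r N y = be N y by move=> y; rewrite /r oN.
have mrN : mr N = \sum_(y < d) be N y by rewrite /mr; apply: eq_bigr => y _; exact: rN.
have C1 : \sum_(y < d) `|al 0 y - be N y| <= \sum_(0 <= k < N) (mr k + mr k.+1 - 2 * T k).
  apply: le_trans (_ : _ <= \sum_(y < d) \sum_(0 <= k < N) `|r k y - r k.+1 y|) _.
    apply: ler_sum => y _; rewrite -rN; exact: (chain_tri (fun k => r k y) N).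
  rewrite exchange_big /=; apply: ler_sum_nat => k /andP[_ kN]; apply: link; by rewrite eN ltnS.
have C2 : \sum_(x < d) `|al 0 x - be N ((x + 1) %% d)%N| <= m + mr N - 2 * Tl.
  have := LL (fun x => ((x + 1) %% d)%N) sA0 hBN; rewrite /= (rot' (be N)) -mrN /Tl -/N -/m; lra.
have D : \sum_(k < d) `|al 0 (k.+1 %% d)%N - al 0 k| <=
    \sum_(y < d) `|al 0 y - be N y| + \sum_(x < d) `|al 0 x - be N ((x + 1) %% d)%N|.
  rewrite -(rot' (fun y => `|al 0 y - be N y|)) -big_split /=; apply: ler_sum => x _.
  rewrite !addn1 (distrC (al 0 x)); exact: ler_distD.
set X := \sum_(0 <= k < N) mr k.
set Y := \sum_(0 <= k < N) mr k.+1.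
set ST := \sum_(0 <= k < N) T k.
have eS : \sum_(0 <= k < N) (mr k + mr k.+1 - 2 * T k) = X + Y - 2 * ST.
  by rewrite sumrB big_split -mulr_sumr.
have eXY : X + mr N = m + Y.
  have e1 : \sum_(0 <= k < N.+1) mr k = X + mr N by rewrite big_nat_recr.
  have e2 : \sum_(0 <= k < N.+1) mr k = mr 0 + Y by rewrite big_nat_recl.
  lra.
have Yle : Y <= N%:R.
  have <- : \sum_(0 <= k < N) (1 : R) = N%:R by rewrite sumr_const_nat subn0.
  apply: ler_sum_nat => k /andP[_ kN]; apply: mr_le1; by rewrite eN ltnS.
have mrN1 : mr N <= 1 by apply: mr_le1; rewrite eN ltnSn.
have ST_le : ST <= N%:R - (1 - m).
  have e1 : \sum_(0 <= k < N) (1 - T k) = N%:R - ST by rewrite sumrB sumr_const_nat subn0.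
  have T0 : T 0 <= m by apply: (@T_le 0); rewrite eN ltnS.
  have rest : 0 <= \sum_(1 <= k < N) (1 - T k).
    rewrite big_nat_cond; apply: sumr_ge0 => k /andP[/andP[_ kN] _].
    have : T k <= 1 by apply: T_le1; rewrite eN ltnS.
    lra.
  have e2 : \sum_(0 <= k < N) (1 - T k) = (1 - T 0) + \sum_(1 <= k < N) (1 - T k).
    by rewrite big_ltn.
  lra.
have Tl_le : Tl <= m by apply: ler_sum => x _; exact: (qle_row _ _ sA0 hBN).
have e2n : ((2 * n)%:R : R) = N%:R + 1 by rewrite eN -addn1 natrD.
have SD : \sum_(k < d) `|al 0 (k.+1 %% d)%N - al 0 k| <= 2 * ((2 * n)%:R - Tl - ST) - 2 * (1 - m).
  lra.
have IL : 2 * (1 - m) <= (2 * n)%:R - Tl - ST by lra.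
have SD0 : 0 <= \sum_(k < d) `|al 0 (k.+1 %% d)%N - al 0 k| by apply: sumr_ge0.
have [d0|dpos] := posnP d.
  rewrite (sum_d0 (fun x => `|al 0 x - d%:R^-1|) d0) (_ : d%:R = 0 :> R); last by rewrite d0.
  by rewrite mul0r mul0r.
have spr := spread R (al 0) d dpos; rewrite -/m in spr.
set S := \sum_(x < d) `|al 0 x - m / d%:R| in spr.
have dR : 0 < d%:R :> R by rewrite ltr0n.
have L1 : \sum_(x < d) `|al 0 x - d%:R^-1| <= S + (1 - m).
  apply: le_trans (_ : _ <= \sum_(x < d) (`|al 0 x - m / d%:R| + `|m / d%:R - d%:R^-1|)) _.
    apply: ler_sum => x _; exact: ler_distD.
  rewrite big_split /= sum_cst_ord.
  have -> : m / d%:R - d%:R^-1 = - ((1 - m) / d%:R) by ring.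
  rewrite normrN ger0_norm; last by apply: divr_ge0; rewrite ?subr_ge0 // ltW.
  rewrite [d%:R * _]mulrC divfK ?pnatr_eq0 -?lt0n // -/S; lra.
have [d1|d2] := eqVneq d 1%N.
  have S0 : S = 0 by rewrite /S /m; exact: sum_d1.
  have d1R : d%:R = 1 :> R by rewrite d1.
  rewrite [X in X / 2]d1R.
  Timeout 30 lra.
have d2' : 2 <= d%:R :> R.
  have : (1 < d)%N by rewrite ltn_neqAle eq_sym d2 dpos.
  by rewrite (ler_nat R 2 d).
have h1 : 0 <= (d%:R - 2) * (1 - m) by apply: mulr_ge0; rewrite subr_ge0.
have h2 : d%:R / 4 * \sum_(k < d) `|al 0 (k.+1 %% d)%N - al 0 k| <=
          d%:R / 4 * (2 * ((2 * n)%:R - Tl - ST) - 2 * (1 - m)).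
  by apply: ler_wpM2l => //; apply: divr_ge0; rewrite ?ler0n.
set I := (2 * n)%:R - Tl - ST in h2 IL *.
set SDs := \sum_(k < d) `|al 0 (k.+1 %% d)%N - al 0 k| in h2 spr.
have e : d%:R / 4 * (2 * I - 2 * (1 - m)) + (1 - m) = d%:R / 2 * I - (d%:R - 2) * (1 - m) / 2 by field.
Timeout 30 lra.
Qed.

End Point.

Section Meas.
Context (R : realType) (dL : measure_display) (L : measurableType dL) (P : probability L R).

Lemma int_cst (k : R) : P.-integrable setT (EFin \o cst k).
Proof. exact: (finite_measure_integrable_cst P k measurableT). Qed.

Lemma int_B (f g : L -> R) : P.-integrable setT (EFin \o f) -> P.-integrable setT (EFin \o g) ->
  P.-integrable setT (EFin \o (fun l => f l - g l)).
Proof.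
move=> hf hg; apply: (eq_integrable measurableT _ _ _ (integrableB measurableT hf hg)) => l _ /=.
by rewrite EFinB.
Qed.

Lemma int_Z (c : R) (f : L -> R) : P.-integrable setT (EFin \o f) ->
  P.-integrable setT (EFin \o (fun l => c * f l)).
Proof.
move=> hf; apply: (eq_integrable measurableT _ _ _ (integrableZl measurableT c hf)) => l _ /=.
by rewrite EFinM.
Qed.

Lemma int_sum (I : Type) (s : seq I) (Q : pred I) (h : I -> L -> R) :
  (forall i, Q i -> P.-integrable setT (EFin \o h i)) ->
  P.-integrable setT (EFin \o (fun l => \sum_(i <- s | Q i) h i l)).
Proof.
move=> hi; apply: (eq_integrable measurableT _ _ _ (@integrable_sum _ _ _ P setT measurableT I s Q (fun i => EFin \o h i) hi)) => l _ /=.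
by rewrite sumEFin.
Qed.

Lemma Rint_sum (I : Type) (s : seq I) (Q : pred I) (h : I -> L -> R) :
  (forall i, Q i -> P.-integrable setT (EFin \o h i)) ->
  Rintegral P setT (fun l => \sum_(i <- s | Q i) h i l) = \sum_(i <- s | Q i) Rintegral P setT (h i).
Proof.
move=> hi; elim: s => [|i s IH].
  rewrite (@eq_Rintegral _ _ _ P setT (fun _ => 0)); last by move=> l _; rewrite big_nil.
  by rewrite Rintegral_cst // mul0r big_nil.
rewrite big_cons; case: ifP => Qi.
  rewrite (@eq_Rintegral _ _ _ P setT (fun l => h i l + \sum_(j <- s | Q j) h j l)); last first.
    by move=> l _; rewrite big_cons Qi.
  rewrite RintegralD //; [by rewrite IH | exact: hi | exact: int_sum].
rewrite (@eq_Rintegral _ _ _ P setT (fun l => \sum_(j <- s | Q j) h j l)); last first.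
  by move=> l _; rewrite big_cons Qi.
exact: IH.
Qed.

End Meas.

Unset Implicit Arguments.
Set Strict Implicit.

Theorem lemma2 (R : realType) (dL : measure_display) (L : measurableType dL)
  (P : probability L R) (n d : nat) (suppA suppB : pred nat)
  (p : nat -> nat -> L -> 'I_d.+1 -> 'I_d.+1 -> R) :
  (0 < n)%N ->
  (forall a, inA n a -> suppA a) ->
  (forall b, inB n b -> suppB b) ->
  (forall a b x y, suppA a -> suppB b ->
     measurable_fun setT (fun l => p a b l x y)) ->
  (forall a b l x y, suppA a -> suppB b -> 0 <= p a b l x y) ->
  (forall a b l, suppA a -> suppB b ->
     \sum_(x < d.+1) \sum_(y < d.+1) p a b l x y = 1) ->
  (forall a b b' l x, suppA a -> suppB b -> suppB b' ->
     \sum_(y < d.+1) p a b l x y = \sum_(y < d.+1) p a b' l x y) ->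
  (forall a a' b l y, suppA a -> suppA a' -> suppB b ->
     \sum_(x < d.+1) p a b l x y = \sum_(x < d.+1) p a' b l x y) ->
  (\int[P]_l (\sum_(x < d) `| PXgivenAL p 0 1 l x - d%:R^-1 |)%:E
     <= ((d%:R / 2) * Ind P n p)%:E)%E.
Proof.
move=> n0 hA hB hm hp0 hp1 hnsB hnsA.
have sA0 : suppA 0%N by apply: hA; rewrite /inA /=; lia.
have sB1 : suppB 1%N by apply: hB; rewrite /inB /=; lia.
have sBN : suppB (2 * n - 1)%N.
  apply: hB; rewrite /inB; have -> : (2 * n - 1 = (2 * n.-1).+1)%N by lia.
  by rewrite /= mul2n odd_double /=; lia.
have ple1 : forall a b l x y, suppA a -> suppB b -> p a b l x y <= 1.
  move=> a b l x y ha hb; rewrite -(hp1 a b l ha hb).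
  apply: le_trans (single_le (F := fun j => p a b l x j) y _) _; first by move=> j; exact: hp0.
  apply: (single_le (F := fun i => \sum_(j < d.+1) p a b l i j) x) => i.
  by apply: sumr_ge0 => j _; exact: hp0.
have base : forall a b x y, suppA a -> suppB b -> P.-integrable setT (EFin \o (fun l => p a b l x y)).
  move=> a b x y ha hb.
  apply: (@le_integrable _ _ _ P setT measurableT _ (EFin \o cst 1)).
  - apply/measurable_EFinP; exact: hm.
  - move=> l _ /=; rewrite lee_fin ger0_norm ?hp0 // normr1; exact: ple1.
  - exact: int_cst.
set c := d%:R / 2.
pose A l := \sum_(x < d) p 0%N (2 * n - 1)%N l (inord x) (inord ((x + 1) %% d)%N).
pose B l := \sum_(a < 2 * n | inA n a) \sum_(b < 2 * n | inB n b && ((a.+1 == b) || (b.+1 == a)))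
   \sum_(x < d) p a b l (inord x) (inord x).
pose G l := (2 * n)%:R - A l - B l.
pose f0 l := \sum_(x < d) `|PXgivenAL p 0 1 l x - d%:R^-1|.
have intA : P.-integrable setT (EFin \o A).
  by apply: int_sum => x _; exact: base.
have intB : P.-integrable setT (EFin \o B).
  apply: int_sum => a ia; apply: int_sum => b /andP[ib _]; apply: int_sum => x _.
  by apply: base; [exact: hA | exact: hB].
have intG : P.-integrable setT (EFin \o G).
  by apply: int_B; [apply: int_B; [exact: int_cst | exact: intA] | exact: intB].
have pw : forall l, f0 l <= c * G l.
  move=> l; rewrite /f0 /G /B /c.
  rewrite (pair_sum _ (fun a b => \sum_(x < d) p a b l (inord x) (inord x)) n n0).
  exact: (@pointwise R n d suppA suppB (fun a b => p a b l) n0 hA hB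
     (fun a b x y ha hb => hp0 a b l x y ha hb) (fun a b ha hb => hp1 a b l ha hb)
     (fun a b b' x ha hb hb' => hnsB a b b' l x ha hb hb')
     (fun a a' b y ha ha' hb => hnsA a a' b l y ha ha' hb)).
have mf0 : measurable_fun setT f0.
  rewrite /f0; apply: measurable_sum => x.
  apply: measurableT_comp; first exact: normr_measurable.
  apply/measurable_EFinP.
  apply: (measurable_int P (int_B _ (int_cst _ _))).
  by rewrite /PXgivenAL; apply: int_sum => y _; exact: base.
have step1 : (\int[P]_l (f0 l)%:E <= \int[P]_l (c * G l)%:E)%E.
  apply: ge0_le_integral => //.
  - by move=> l _; rewrite lee_fin; apply: sumr_ge0 => x _; exact: normr_ge0.
  - by apply/measurable_EFinP.
  - exact: (measurable_int P (int_Z c intG)).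
  - by move=> l _; rewrite lee_fin; exact: pw.
have step2 : (\int[P]_l (c * G l)%:E = (c * Ind P n p)%:E)%E.
  rewrite -[LHS]fineK; last exact: (integrable_fin_num measurableT (int_Z c intG)).
  congr EFin.
  change (Rintegral P setT (fun l => c * G l) = c * Ind P n p).
  rewrite RintegralZl //; congr (c * _).
  have intCA : P.-integrable setT (EFin \o (fun l => (2 * n)%:R - A l)).
    by apply: int_B; [exact: int_cst | exact: intA].
  rewrite /G (RintegralB measurableT intCA intB).
  rewrite (RintegralB measurableT (int_cst _ _) intA).
  have ps : fine (P setT) = 1 :> R by rewrite probability_setT.
  rewrite (Rintegral_cst P measurableT) ps mulr1.
  rewrite /Ind /A /B.
  rewrite Rint_sum; last by move=> x _; exact: base.
  rewrite Rint_sum; last first.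
    move=> a ia; apply: int_sum => b /andP[ib _]; apply: int_sum => x _.
    by apply: base; [exact: hA | exact: hB].
  congr (_ - _ - _).
  apply: eq_bigr => a ia.
  rewrite Rint_sum; last first.
    move=> b /andP[ib _]; apply: int_sum => x _.
    by apply: base; [exact: hA | exact: hB].
  apply: eq_bigr => b /andP[ib _].
  rewrite Rint_sum //; last by move=> x _; apply: base; [exact: hA | exact: hB].
rewrite -step2; exact: step1.
Qed.
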